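(* Let $\mathcal F=(F,\rightarrowtail)$ be an argumentation framework with grounded extension $\mathcal G$. If $A\subseteq F$ is tenable, then $A\cup\mathcal G$ is conflict-free.
   Context: An argumentation framework (AF) $\mathcal F=(F,\rightarrowtail)$ consists of a (possibly infinite) set $F$ of arguments and a binary attack relation $\rightarrowtail\subseteq F\times F$. An argument $a$ attacks a set $B$ if $a\rightarrowtail b$ for some $b\in B$; a set $A$ attacks $x$ if some $a\in A$ attacks $x$. $A^+=\{x\in F:\exists a\in A,\ a\rightarrowtail x\}$. A set is conflict-free if none of its elements attacks one of its elements. For $A,B\subseteq F$, $A$ is as cogent as $B$, written $A\succeq B$, if $A$ is conflict-free and every $b\in B$ that attacks $A$ belongs to $A^+$. We write $B\succ A$ if $B\succeq A$ and not $A\succeq B$. Grounded extension: a set $S$ defends an argument $a$ if every attacker of $a$ is attacked by some element of $S$. Put $\mathcal G_0=\emptyset$, $\mathcal G_{\alpha+1}=\{a\in F: \mathcal G_\alpha \text{ defends } a\}$ for ordinals $\alpha$, and $\mathcal G_\lambda=\bigcup_{\alpha<\lambda}\mathcal G_\alpha$ for limit ordinals $\lambda$. There is an ordinal $\beta$ with $\mathcal G_\gamma=\mathcal G_\beta$ for all $\gamma\ge\beta$; the grounded extension is $\mathcal G=\mathcal G_\beta$. Tenability game: a tenability dispute on $\mathcal F$ is a finite sequence $(X_0,\dots,X_n)$ of subsets of $F$, where even-indexed sets are moves of the Proponent (Pro) and odd-indexed sets are moves of the Opponent (Opp), such that (1) each $X_i$ is conflict-free; (2) $X_i\subseteq X_{i+2}$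 whenever both are defined; (3) $X_1$ and each $X_{i+2}\setminus X_i$ are finite; (4) $X_{i+1}\succeq X_i$ for every $i$; (5) every Opp move satisfies $X_{2k+1}\succ X_{2k}$. Play starts with $X_0=A$ and players alternately extend the sequence so that it remains a tenability dispute. A dispute is concluded if it has no legal extension; a concluded dispute is won by the player who made its last move. A strategy for Pro assigns to each dispute ending with an Opp move a legal Pro reply; it is winning if every concluded dispute starting with $X_0=A$ in which Pro follows it is won by Pro (infinite plays count as wins for Pro). $A$ is tenable if Pro has a winning strategy starting with $X_0=A$. *)

(* Defs.v *)
From Stdlib Require Import List Arith.
Import ListNotations.

Set Implicit Arguments.

Section AF.
(* An argumentation framework: the type [Arg] is the set F of arguments,
   [att x y] means x attacks y. *)
Variables (Arg : Type) (att : Arg -> Arg -> Prop).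

Definition aset := Arg -> Prop.

Definition conflict_free (A : aset) : Prop :=
  forall a b, A a -> A b -> ~ att a b.

Definition attacks_set (a : Arg) (B : aset) : Prop := exists b, B b /\ att a b.

Definition plus (A : aset) : aset := fun x => exists a, A a /\ att a x.

Definition cogent (A B : aset) : Prop :=
  conflict_free A /\ forall b, B b -> attacks_set b A -> plus A b.

Definition strictly_cogent (B A : aset) : Prop := cogent B A /\ ~ cogent A B.

Definition finite_set (A : aset) : Prop :=
  exists l : list Arg, forall x, A x -> In x l.

Definition setminus (A B : aset) : aset := fun x => A x /\ ~ B x.

Definition subset (A B : aset) : Prop := forall x, A x -> B x.

Definition defends (S : aset) (a : Arg) : Prop :=
  forall b, att b a -> exists c, S c /\ att c b.

(* Grounded extension: union of the transfinite stages G_alpha.  An argument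
   belongs to some stage G_{alpha+1} iff it is defended by an earlier stage;
   the inductive predicate below is exactly this union (the height of a
   derivation is the ordinal stage). *)
Inductive grounded : Arg -> Prop :=
  grounded_intro : forall a,
    (forall b, att b a -> exists c, grounded c /\ att c b) -> grounded a.

(* Disputes: finite non-empty sequences X_0 ... X_n, represented as lists;
   X i := nth i d (empty set). Even indices: Pro, odd indices: Opp. *)
Definition X (d : list aset) (i : nat) : aset := nth i d (fun _ => False).

Definition is_dispute (d : list aset) : Prop :=
  let L := length d in
  1 <= L /\
  (forall i, i < L -> conflict_free (X d i)) /\
  (forall i, i + 2 < L -> subset (X d i) (X d (i + 2))) /\
  (2 <= L -> finite_set (X d 1)) /\
  (forall i, i + 2 < L -> finite_set (setminus (X d (i + 2)) (X d i))) /\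
  (forall i, i + 1 < L -> cogent (X d (i + 1)) (X d i)) /\
  (forall k, 2 * k + 1 < L -> strictly_cogent (X d (2 * k + 1)) (X d (2 * k))).

Definition concluded (d : list aset) : Prop :=
  is_dispute d /\ ~ exists Y, is_dispute (d ++ [Y]).

(* Won by Pro: last move X_n has even index n, i.e. length odd. *)
Definition won_by_pro (d : list aset) : Prop := Nat.Odd (length d).

Definition strategy := list aset -> aset.

Definition follows (sigma : strategy) (d : list aset) : Prop :=
  forall k, 1 <= k -> 2 * k < length d -> X d (2 * k) = sigma (firstn (2 * k) d).

Definition is_strategy_from (A : aset) (sigma : strategy) : Prop :=
  forall d, is_dispute d -> X d 0 = A -> follows sigma d ->
    Nat.Even (length d) -> is_dispute (d ++ [sigma d]).

Definition winning_from (A : aset) (sigma : strategy) : Prop :=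
  is_strategy_from A sigma /\
  forall d, concluded d -> X d 0 = A -> follows sigma d -> won_by_pro d.

Definition tenable (A : aset) : Prop :=
  is_dispute [A] /\ exists sigma, winning_from A sigma.

End AF.

(* Main.v *)
Require Import Defs.
From Stdlib Require Import List Arith Lia Classical.
Import ListNotations.

Inductive safe {Arg : Type} (att : Arg -> Arg -> Prop) (A : Arg -> Prop) : Arg -> Prop :=
  safe_intro : forall x, (forall d, A d -> ~ att d x) ->
    (forall b, att b x -> exists c, safe att A c /\ att c b) -> safe att A x.

Definition safe_rec' {Arg : Type} (att : Arg -> Arg -> Prop) (A : Arg -> Prop) (Q : Arg -> Prop)
  (H : forall x, (forall d, A d -> ~ att d x) ->
        (forall b, att b x -> exists c, safe att A c /\ Q c /\ att c b) -> Q x) :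
  forall x, safe att A x -> Q x :=
  fix F x h {struct h} :=
    match h with
    | safe_intro _ _ x hA hb =>
        H x hA (fun b hbx =>
          match hb b hbx with
          | ex_intro _ c (conj hc hcb) => ex_intro _ c (conj hc (conj (F c hc) hcb))
          end)
    end.

Definition grounded_rec' {Arg : Type} (att : Arg -> Arg -> Prop) (Q : Arg -> Prop)
  (H : forall x, (forall b, att b x -> exists c, grounded att c /\ Q c /\ att c b) -> Q x) :
  forall x, grounded att x -> Q x :=
  fix F x h {struct h} :=
    match h with
    | grounded_intro x hb =>
        H x (fun b hbx =>
          match hb b hbx with
          | ex_intro _ c (conj hc hcb) => ex_intro _ c (conj hc (conj (F c hc) hcb))
          end)
    end.

Lemma grounded_cf {Arg : Type} (att : Arg -> Arg -> Prop) :
  forall x, grounded att x -> forall y, grounded att y -> ~ att y x.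
Proof.
  apply (grounded_rec' att (fun x => forall y, grounded att y -> ~ att y x)).
  intros x IH y Hy Hyx.
  destruct (IH y Hyx) as [c [Gc [Qc Hcy]]].
  destruct Hy as [y Hy'].
  destruct (Hy' c Hcy) as [c' [Gc' Hc'c]].
  exact (Qc c' Gc' Hc'c).
Qed.

Lemma safe_grounded {Arg : Type} (att : Arg -> Arg -> Prop) A :
  forall x, safe att A x -> grounded att x.
Proof.
  apply (safe_rec' att A (grounded att)).
  intros x _ IH. constructor. intros b hb.
  destruct (IH b hb) as [c [_ [Gc H]]]. eauto.
Qed.

Lemma exists_safe {Arg : Type} (att : Arg -> Arg -> Prop) (A : Arg -> Prop) g a :
  grounded att g -> A a -> att g a -> exists x, safe att A x /\ attacks_set att x A.
Proof.
  intros Gg Aa Hga.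
  destruct (classic (exists x, safe att A x /\ attacks_set att x A)) as [H|H]; auto.
  exfalso.
  assert (HG : forall g, grounded att g -> safe att A g).
  { apply grounded_rec'. intros x IH. constructor.
    - intros d Ad Hdx. destruct (IH d Hdx) as [c [_ [Sc Hcd]]].
      apply H. exists c. split; auto. exists d; auto.
    - intros b hb. destruct (IH b hb) as [c [_ [Sc Hcb]]]. eauto. }
  apply H. exists g. split; auto. exists a; auto.
Qed.

Lemma closure_one {Arg : Type} (att : Arg -> Arg -> Prop) (A P : Arg -> Prop) (N : list Arg)
  (HN : forall y, P y -> A y \/ In y N) :
  forall x, safe att A x -> exists L, In x L /\ (forall y, In y L -> safe att A y) /\
    (forall y, In y L -> forall b, P b -> att b y -> exists c, In c L /\ att c b).
Proof.
  apply (safe_rec' att A). intros x HA IH.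
  assert (HK : forall K : list Arg, exists L, (forall y, In y L -> safe att A y) /\
    (forall y, In y L -> forall b, P b -> att b y -> exists c, In c L /\ att c b) /\
    (forall b, In b K -> P b -> att b x -> exists c, In c L /\ att c b)).
  { induction K as [|b K [L1 [H1 [H2 H3]]]].
    - exists nil. simpl. repeat split; tauto.
    - destruct (classic (att b x)) as [Hbx|Hbx].
      + destruct (IH b Hbx) as [c [Sc [[Lc [Hc [Hc1 Hc2]]] Hcb]]].
        exists (Lc ++ L1). split; [|split].
        * intros y Hy; apply in_app_or in Hy; destruct Hy; auto.
        * intros y Hy b' Pb' Hb'. apply in_app_or in Hy; destruct Hy as [Hy|Hy].
          -- destruct (Hc2 y Hy b' Pb' Hb') as [c' [? ?]]; exists c'; split; auto; apply in_or_app; auto.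
          -- destruct (H2 y Hy b' Pb' Hb') as [c' [? ?]]; exists c'; split; auto; apply in_or_app; auto.
        * intros b' Hb' Pb' Hb'x. destruct Hb' as [<-|Hb'].
          -- exists c; split; auto; apply in_or_app; auto.
          -- destruct (H3 b' Hb' Pb' Hb'x) as [c' [? ?]]; exists c'; split; [apply in_or_app; auto|auto].
      + exists L1. split; [|split]; auto. intros b' Hb' Pb' Hb'x.
        destruct Hb' as [<-|Hb']; [contradiction|auto]. }
  destruct (HK N) as [L [H1 [H2 H3]]].
  exists (x :: L). split; [left; auto|]. split.
  - intros y [<-|Hy]; auto. constructor; auto. intros b hb.
    destruct (IH b hb) as [c [Sc [_ Hcb]]]; eauto.
  - intros y [<-|Hy] b Pb Hb.
    + destruct (HN b Pb) as [Ab|Nb]. { exfalso; exact (HA b Ab Hb). }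
      destruct (H3 b Nb Pb Hb) as [c [? ?]]. exists c; split; [right|]; auto.
    + destruct (H2 y Hy b Pb Hb) as [c [? ?]]; exists c; split; [right|]; auto.
Qed.

Lemma closure_list {Arg : Type} (att : Arg -> Arg -> Prop) (A P : Arg -> Prop) (N : list Arg)
  (HN : forall y, P y -> A y \/ In y N) :
  forall M, (forall y, In y M -> safe att A y) ->
  exists L, (forall y, In y M -> In y L) /\ (forall y, In y L -> safe att A y) /\
    (forall y, In y L -> forall b, P b -> att b y -> exists c, In c L /\ att c b).
Proof.
  induction M as [|m M IHM]; intros HM.
  - exists nil. simpl. repeat split; tauto.
  - destruct IHM as [L1 [H1 [H2 H3]]]. { intros y Hy; apply HM; right; auto. }
    destruct (closure_one att A P N HN m (HM m (or_introl eq_refl))) as [Lm [Hm1 [Hm2 Hm3]]].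
    exists (Lm ++ L1). split; [|split].
    + intros y [<-|Hy]; apply in_or_app; auto.
    + intros y Hy; apply in_app_or in Hy; destruct Hy; auto.
    + intros y Hy b' Pb' Hb'. apply in_app_or in Hy; destruct Hy as [Hy|Hy].
      * destruct (Hm3 y Hy b' Pb' Hb') as [c' [? ?]]; exists c'; split; auto; apply in_or_app; auto.
      * destruct (H3 y Hy b' Pb' Hb') as [c' [? ?]]; exists c'; split; auto; apply in_or_app; auto.
Qed.

Lemma X_app1 {Arg : Type} (d e : list (aset Arg)) i : i < length d -> X (d ++ e) i = X d i.
Proof. intros; unfold X; apply app_nth1; auto. Qed.

Lemma X_last {Arg : Type} (d : list (aset Arg)) y : X (d ++ [y]) (length d) = y.
Proof. unfold X; rewrite app_nth2 by lia; rewrite Nat.sub_diag; reflexivity. Qed.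

Lemma follows_ext {Arg : Type} (sigma : strategy Arg) d y :
  follows sigma d -> (Nat.Even (length d) -> y = sigma d) -> follows sigma (d ++ [y]).
Proof.
  intros Hf Hy k Hk Hlt. rewrite length_app in Hlt; simpl in Hlt.
  destruct (Nat.eq_dec (2*k) (length d)) as [E|E].
  - rewrite E, X_last, firstn_app, firstn_all, Nat.sub_diag; simpl; rewrite app_nil_r.
    apply Hy. exists k; lia.
  - rewrite X_app1 by lia. rewrite Hf by lia. f_equal. rewrite firstn_app.
    replace (2*k - length d) with 0 by lia. simpl. rewrite app_nil_r. reflexivity.
Qed.

Lemma opp_ext {Arg : Type} (att : Arg -> Arg -> Prop) (d : list (aset Arg)) (O' : aset Arg) :
  is_dispute att d -> Nat.Odd (length d) ->
  (length d = 1 -> finite_set O') ->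
  (3 <= length d -> subset (X d (length d - 2)) O' /\ finite_set (setminus O' (X d (length d - 2)))) ->
  conflict_free att O' -> cogent att O' (X d (length d - 1)) -> ~ cogent att (X d (length d - 1)) O' ->
  is_dispute att (d ++ [O']).
Proof.
  intros [H1 [H2 [H3 [H4 [H5 [H6 H7]]]]]] [m Hm] Hf1 Hf3 Hcf Hc Hnc.
  unfold is_dispute. cbv zeta. rewrite length_app; simpl.
  split; [lia|]. split; [|split; [|split; [|split; [|split]]]].
  - intros i Hi. destruct (Nat.eq_dec i (length d)) as [E|E].
    + subst i. rewrite X_last. auto.
    + rewrite X_app1 by lia. apply H2. lia.
  - intros i Hi. destruct (Nat.eq_dec (i+2) (length d)) as [E|E].
    + rewrite E, X_last. rewrite X_app1 by lia. replace i with (length d - 2) by lia.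
      apply Hf3. lia.
    + rewrite !X_app1 by lia. apply H3. lia.
  - intros Hl. destruct (Nat.eq_dec (length d) 1) as [E|E].
    + replace 1 with (length d) by lia. rewrite X_last. auto.
    + rewrite X_app1 by lia. apply H4. lia.
  - intros i Hi. destruct (Nat.eq_dec (i+2) (length d)) as [E|E].
    + rewrite E, X_last. rewrite X_app1 by lia. replace i with (length d - 2) by lia.
      apply Hf3. lia.
    + rewrite !X_app1 by lia. apply H5. lia.
  - intros i Hi. destruct (Nat.eq_dec (i+1) (length d)) as [E|E].
    + rewrite E, X_last. rewrite X_app1 by lia. replace i with (length d - 1) by lia. auto.
    + rewrite !X_app1 by lia. apply H6. lia.
  - intros k Hk. destruct (Nat.eq_dec (2*k+1) (length d)) as [E|E].
    + replace (k + (k + 0) + 1) with (length d) by lia. rewrite X_last.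
      rewrite X_app1 by lia. replace (k + (k + 0)) with (length d - 1) by lia.
      split; auto.
    + rewrite !X_app1 by lia. apply H7. lia.
Qed.

Definition Inv {Arg : Type} (att : Arg -> Arg -> Prop) (A : aset Arg) (d : list (aset Arg)) : Prop :=
  (exists N, forall y, X d (length d - 1) y -> A y \/ In y N) /\
  (exists Lo, (forall y, 3 <= length d -> X d (length d - 2) y -> In y Lo) /\
              (forall y, In y Lo -> safe att A y)).

Lemma main_ind {Arg : Type} (att : Arg -> Arg -> Prop) (A : aset Arg) (sigma : strategy Arg)
  (Hs : is_strategy_from att A sigma) :
  forall x, safe att A x -> forall d, is_dispute att d -> X d 0 = A -> follows sigma d ->
    Nat.Odd (length d) -> Inv att A d -> attacks_set att x (X d (length d - 1)) -> False.
Proof.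
  apply (safe_rec' att A (fun x => forall d, is_dispute att d -> X d 0 = A -> follows sigma d ->
    Nat.Odd (length d) -> Inv att A d -> attacks_set att x (X d (length d - 1)) -> False)).
  intros x HA IH d Hd H0 Hf Hodd HInv [p [Pp Hxp]].
  destruct HInv as [[N HN] [Lo [HLo1 HLo2]]].
  set (P := X d (length d - 1)) in *.
  assert (Hlen : 1 <= length d) by (destruct Hodd; lia).
  destruct (classic (exists e, P e /\ att e x)) as [[e [Pe Hex]]|Hna].
  - destruct (IH e Hex) as [c [Sc [Qc Hce]]].
    apply (Qc d Hd H0 Hf Hodd). { split; [exists N|exists Lo]; auto. }
    exists e; split; auto.
  - assert (Sx : safe att A x).
    { constructor; auto. intros b hb. destruct (IH b hb) as [c [Sc [_ Hcb]]]; eauto. }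
    destruct (closure_list att A P N HN (x :: Lo)) as [L [HL1 [HL2 HL3]]].
    { intros y [<-|Hy]; auto. }
    set (O' := (fun y => In y L) : aset Arg).
    assert (Hcf : conflict_free att O').
    { intros a b Ha Hb Hab.
      apply (grounded_cf att b (safe_grounded att A b (HL2 b Hb)) a
               (safe_grounded att A a (HL2 a Ha)) Hab). }
    assert (Hd1 : is_dispute att (d ++ [O'])).
    { apply opp_ext; auto.
      - intros _. exists L. auto.
      - intros H3. split.
        + intros y Hy. apply HL1. right. apply HLo1; auto.
        + exists L. intros y [Hy _]. exact Hy.
      - split; auto. intros b Pb [o [Oo Hbo]].
        destruct (HL3 o Oo b Pb Hbo) as [c [? ?]]. exists c; split; auto.
      - intros [_ Hc].
        destruct (Hc x (HL1 x (or_introl eq_refl)) (ex_intro _ p (conj Pp Hxp))) as [e [Pe Hex]].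
        apply Hna; eauto. }
    assert (Hf1 : follows sigma (d ++ [O'])).
    { apply follows_ext; auto. intros [m Hm]. destruct Hodd as [m' Hm']. lia. }
    assert (H01 : X (d ++ [O']) 0 = A) by (rewrite X_app1 by lia; auto).
    assert (Hev : Nat.Even (length (d ++ [O']))).
    { rewrite length_app. destruct Hodd as [m Hm]. exists (m+1). simpl. lia. }
    pose proof (Hs _ Hd1 H01 Hf1 Hev) as Hd2.
    set (P' := sigma (d ++ [O'])) in *.
    set (d2 := (d ++ [O']) ++ [P']) in *.
    assert (Hl2 : length d2 = length d + 2).
    { unfold d2. rewrite !length_app. simpl. lia. }
    assert (XP' : X d2 (length d + 1) = P').
    { replace (length d + 1) with (length (d ++ [O'])) by (rewrite length_app; simpl; lia).
      apply X_last. }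
    assert (XO' : X d2 (length d) = O').
    { unfold d2. rewrite X_app1 by (rewrite length_app; simpl; lia). apply X_last. }
    assert (XP : X d2 (length d - 1) = P).
    { unfold d2. rewrite !X_app1 by (try rewrite length_app; simpl; lia). reflexivity. }
    pose proof Hd2 as Hd2'.
    destruct Hd2 as [_ [_ [G3 [_ [G5 [G6 _]]]]]].
    assert (Hcog : cogent att P' O').
    { rewrite <- XP', <- XO'. apply G6. lia. }
    assert (Hsub : subset P P').
    { rewrite <- XP', <- XP. replace (length d + 1) with (length d - 1 + 2) by lia.
      apply G3. lia. }
    assert (Hfin : finite_set (setminus P' P)).
    { rewrite <- XP', <- XP. replace (length d + 1) with (length d - 1 + 2) by lia.
      apply G5. lia. }
    destruct Hfin as [N2 HN2].
    destruct Hcog as [_ Hcog].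
    destruct (Hcog x (HL1 x (or_introl eq_refl)) (ex_intro _ p (conj (Hsub p Pp) Hxp)))
      as [e [Pe Hex]].
    destruct (IH e Hex) as [c [Sc [Qc Hce]]].
    apply (Qc d2 Hd2').
    + unfold d2. rewrite X_app1 by (rewrite length_app; simpl; lia). auto.
    + unfold d2. apply follows_ext; auto.
    + rewrite Hl2. destruct Hodd as [m Hm]. exists (m+1). lia.
    + unfold Inv. rewrite Hl2. replace (length d + 2 - 1) with (length d + 1) by lia.
      replace (length d + 2 - 2) with (length d) by lia. rewrite XP', XO'.
      split.
      * exists (N ++ N2). intros y Py. destruct (classic (P y)) as [Hy|Hy].
        -- destruct (HN y Hy); [left|right; apply in_or_app]; auto.
        -- right. apply in_or_app. right. apply HN2. split; auto.
      * exists L. split; auto.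
    + rewrite Hl2. replace (length d + 2 - 1) with (length d + 1) by lia. rewrite XP'.
      exists e; split; auto.
Qed.

Theorem mainTheorem4 (Arg : Type) (att : Arg -> Arg -> Prop) (A : Arg -> Prop) :
  tenable att A ->
  conflict_free att (fun x => A x \/ grounded att x).
Proof.
  intros [H1 [sigma [Hs _]]].
  assert (Hstart : forall x, safe att A x -> attacks_set att x A -> False).
  { intros x Sx Hx. apply (main_ind att A sigma Hs x Sx [A] H1 eq_refl).
    - intros k Hk Hlt. simpl in Hlt. lia.
    - exists 0. reflexivity.
    - split.
      + exists nil. intros y Hy. left. exact Hy.
      + exists nil. split; [intros y Hy; simpl in Hy; lia | intros y []].
    - exact Hx. }
  intros a b [Aa|Ga] [Ab|Gb] Hab.
  - destruct H1 as [_ [Hcf _]]. apply (Hcf 0 ltac:(simpl; lia) a b Aa Ab Hab).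
  - destruct Gb as [b Hb]. destruct (Hb a Hab) as [c [Gc Hca]].
    destruct (exists_safe att A c a Gc Aa Hca) as [x [Sx Hx]]. eauto.
  - destruct (exists_safe att A a b Ga Ab Hab) as [x [Sx Hx]]. eauto.
  - exact (grounded_cf att b Gb a Ga Hab).
Qed.
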